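(* For an even integer $n>1$ and an integer $m\geq 3$, $$\chi_{ld}(P_{m}[\overline{K_{n}}])\leq \begin{cases}3 &\text{if $m$ is odd,}\\ 4 &\text{if $m$ is even.}\end{cases}$$
   Context: All graphs are finite, simple and undirected. For a graph $G=(V,E)$ of order $N$ without isolated vertices, a bijection $f\colon V\to\{1,2,\dots,N\}$ is a local distance antimagic labeling if $w(u)\neq w(v)$ for every edge $uv$, where $w(u)=\sum_{x\in N(u)}f(x)$ and $N(u)$ is the open neighborhood of $u$. $\chi_{ld}(G)$ is the minimum number of distinct weights over all local distance antimagic labelings of $G$. $P_m$ is the path on $m$ vertices, $\overline{K_n}$ the edgeless graph on $n$ vertices. The lexicographic product $G[H]$ has vertex set $V(G)\times V(H)$, with $(g,h)$ adjacent to $(g',h')$ iff $gg'\in E(G)$, or $g=g'$ and $hh'\in E(H)$. *)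

(* Defs.v *)
From mathcomp Require Import all_boot.
Set Implicit Arguments. Unset Strict Implicit. Unset Printing Implicit Defensive.

Definition path_rel (m : nat) : rel 'I_m :=
  fun i j => (i.+1 == j :> nat) || (j.+1 == i :> nat).

Definition edgeless_rel (n : nat) : rel 'I_n := fun _ _ => false.

Definition lexprod (A B : finType) (eG : rel A) (eH : rel B) : rel (A * B) :=
  fun x y => eG x.1 y.1 || ((x.1 == y.1) && eH x.2 y.2).

Section LDA.
Variables (T : finType) (e : rel T).

(* A labeling is a bijection f : V -> {1..N}; encoded as an injective
   f : T -> 'I_#|T| (hence bijective), the label of x being (f x).+1. *)
Definition weight (f : {ffun T -> 'I_#|T|}) (u : T) : nat :=
  \sum_(x | e u x) (f x).+1.

Definition is_lda (f : {ffun T -> 'I_#|T|}) : bool :=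
  injectiveb f && [forall u, forall v, e u v ==> (weight f u != weight f v)].

Definition num_weights (f : {ffun T -> 'I_#|T|}) : nat :=
  size (undup [seq weight f u | u <- enum T]).

(* chi_ld: minimum number of distinct weights over all local distance
   antimagic labelings (default #|T|.+1 if none exists). *)
Definition chi_ld : nat :=
  \big[minn/#|T|.+1]_(f : {ffun T -> 'I_#|T|} | is_lda f) num_weights f.
End LDA.
Arguments path_rel m : clear implicits.
Arguments edgeless_rel n : clear implicits.

(* Main.v *)
Require Import Defs.
From mathcomp Require Import all_boot.
From mathcomp Require Import zify.

Definition spec m i j : nat :=
  if odd m then
    (if j == 0 then (if odd i then i./2 else m.-1 + i./2)
     else (if odd i then m - 2 - i./2 else 2*m - 1 - i./2))
  else (if j == 0 then i else (if odd i then 2*m - i else 2*m - 2 - i)).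
Definition snake m i j := m*j + (if odd j then m - 1 - i else i).
Definition vv m i j := if j < 2 then spec m i j else snake m i j.

Lemma spec_lt m i j : 3 <= m -> i < m -> j < 2 -> spec m i j < 2 * m.
Proof.
move=> hm hi hj; rewrite /spec.
case Hm: (odd m); case Hi: (odd i); case: (j == 0); lia.
Qed.

Lemma vv_lt m n i j : 3 <= m -> 1 < n -> i < m -> j < n -> vv m i j < m * n.
Proof.
move=> hm hn hi hj; rewrite /vv; case: ifP => hj2.
  have := @spec_lt m i j hm hi hj2; nia.
rewrite /snake; case: (odd j); nia.
Qed.

Lemma spec_inj m i i' j j' : 3 <= m -> i < m -> i' < m -> j < 2 -> j' < 2 ->
  spec m i j = spec m i' j' -> i = i' /\ j = j'.
Proof.
move=> hm hi hi' hj hj'; rewrite /spec.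
case Hm: (odd m); case Hi: (odd i); case Hi': (odd i');
case Hj: (j == 0); case Hj': (j' == 0); lia.
Qed.

Lemma snake_div m i j : 0 < m -> i < m -> snake m i j = j * m + (if odd j then m - 1 - i else i)
  /\ (if odd j then m - 1 - i else i) < m.
Proof. move=> h1 h2; rewrite /snake; split; [lia| case: (odd j); lia]. Qed.

Lemma vv_inj m i i' j j' : 3 <= m -> i < m -> i' < m ->
  vv m i j = vv m i' j' -> i = i' /\ j = j'.
Proof.
move=> hm hi hi'; rewrite /vv.
case: ifP => hj; case: ifP => hj'.
- exact: spec_inj.
- have := @spec_lt m i j hm hi hj; rewrite /snake; nia.
- have := @spec_lt m i' j' hm hi' hj'; rewrite /snake; nia.
have [e1 q1] := @snake_div m i j (ltnW (ltnW hm)) hi.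
have [e2 q2] := @snake_div m i' j' (ltnW (ltnW hm)) hi'.
rewrite e1 e2 => E.
have ejj : j = j'.
  have := congr1 (divn^~ m) E.
  rewrite !divnMDl ?divn_small //; try lia.
subst j'; move: E q1; case: (odd j); lia.
Qed.


Lemma nbr_sum (F : nat -> nat) m i : i < m ->
  \sum_(k < m | (i.+1 == k) || (k.+1 == i)) F k =
  (if i.+1 < m then F i.+1 else 0) + (if 0 < i then F i.-1 else 0).
Proof.
move=> hi.
rewrite big_mkcond.
rewrite (eq_bigr (fun k : 'I_m => (if (k == i.+1 :> nat) then F k else 0) +
   (if (k == i.-1 :> nat) && (0 < i) then F k else 0))); last first.
  move=> k _; case: (i.+1 =P k) => [<-|ne1] /=.
    by rewrite eqxx /=; case: (0 < i) => //; rewrite (_ : (i.+1 == i.-1) = false) ?addn0 //; lia.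
  rewrite (_ : (k == i.+1 :> nat) = false); last by apply/eqP => h; apply: ne1; rewrite h.
  rewrite add0n; case: (k.+1 =P i) => [<-|ne2] /=; first by rewrite eqxx.
  case: (k == i.-1 :> nat) /eqP => [e|//] /=; case: (0 < i) /idP => [p|//]; exfalso; apply: ne2; lia.
rewrite big_split /= -!big_mkcond /= big_ord1_eq.
rewrite (eq_bigl (fun k : 'I_m => (0 < i) && (k == i.-1 :> nat))); last by move=> k /=; rewrite andbC.
rewrite (big_ord1_cond_eq _ F (fun _ => 0 < i)).
by rewrite (_ : i.-1 < m) //; lia.
Qed.

Lemma snake_pairs m k i : i < m ->
  \sum_(0 <= j < k.*2) (snake m i j).+1 = \sum_(0 <= j < k.*2) (snake m 0 j).+1.
Proof.
move=> hi; elim: k => [|k IH]; first by rewrite !big_geq.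
rewrite doubleS !big_nat_recr //= IH /snake.
have o1 : odd k.*2 = false by rewrite odd_double.
have o2 : odd k.*2.+1 = true by rewrite /= odd_double.
rewrite o1 o2; lia.
Qed.

Definition LL m n i := \sum_(0 <= j < n) (vv m i j).+1.
Definition DD m n := \sum_(0 <= j < n) (snake m 0 j).+1.

Lemma L_eq m n i : 3 <= m -> 1 < n -> ~~ odd n -> i < m ->
  LL m n i + (2*m+1) = (spec m i 0).+1 + (spec m i 1).+1 + DD m n.
Proof.
move=> hm hn hne hi.
have en : n = (n./2).*2 by have := odd_double_half n; rewrite (negbTE hne) add0n.
rewrite /LL /DD (big_cat_nat (leq0n 2) hn) /=.
rewrite en -(snake_pairs m (n./2) i hi) -en.
rewrite [in RHS](big_cat_nat (leq0n 2) hn) /=.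
rewrite (@eq_big_nat _ _ _ 2 n _ (fun j => (snake m i j).+1)); last first.
  by move=> j /andP[h _]; rewrite /vv ltnNge h.
rewrite !big_nat_recr //= !(big_geq (leqnn 0)) /vv /= /snake /=.
lia.
Qed.

Arguments L_eq {m n i}.

Lemma L_par m n i : 3 <= m -> 1 < n -> ~~ odd n -> i < m ->
  LL m n i = LL m n (odd i).
Proof.
move=> hm hn hne hi.
have h1 := L_eq hm hn hne hi.
have hi2 : odd i < m by case: (odd i); lia.
have h2 := L_eq hm hn hne hi2.
move: h1 h2; rewrite /spec.
case Hm: (odd m); case Hi: (odd i) => /=; lia.
Qed.

Lemma L_rel m n : 3 <= m -> 1 < n -> ~~ odd n ->
  (if odd m then LL m n 0 = LL m n 1 + 2 * m else LL m n 1 = LL m n 0 + 2)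
  /\ 2 * m <= LL m n 0.
Proof.
move=> hm hn hne.
have h1 := L_eq hm hn hne (ltnW (ltnW hm)).
have h2 := L_eq hm hn hne (ltnW hm).
have hD : 2 * m + 1 <= DD m n.
  rewrite /DD (big_cat_nat (leq0n 2) hn) /= !big_nat_recr //= big_geq // /snake /=.
  lia.
move: h1 h2; rewrite /spec.
case Hm: (odd m) => /=; lia.
Qed.


Arguments L_par {m n i}. Arguments L_rel {m n}.

Definition WW m n i := (if i.+1 < m then LL m n i.+1 else 0) + (if 0 < i then LL m n i.-1 else 0).

Lemma Lp m n k : 3 <= m -> 1 < n -> ~~ odd n -> k < m ->
  LL m n k = if odd k then LL m n 1 else LL m n 0.
Proof. move=> hm hn hne hk; rewrite (L_par hm hn hne hk); by case: (odd k). Qed.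

Lemma W_neq m n i : 3 <= m -> 1 < n -> ~~ odd n -> i.+1 < m -> WW m n i != WW m n i.+1.
Proof.
move=> hm hn hne hi.
have Lp' := fun k => @Lp m n k hm hn hne.
have [Hr Hb] := L_rel hm hn hne.
move: (LL m n 0) (LL m n 1) Lp' Hr Hb => a b Lp' Hr Hb.
rewrite /WW; case: i hi => [|j] hi /=.
  rewrite (_ : 1 < m) // (_ : 2 < m) // !Lp' //=; try lia.
  case Hm: (odd m) Hr => Hr; apply/eqP; lia.
rewrite hi.
case: ifP => h3.
  rewrite !Lp' //= ; try lia.
  case Hj: (odd j) => /=; case: (odd m) Hr => Hr; apply/eqP; lia.
rewrite !Lp' //= ; try lia.
have em : m = j.+3 by lia.
case Hm: (odd m) Hr => Hr; case Hj: (odd j) => /=; apply/eqP; lia.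
Qed.

Lemma W_mem m n i : 3 <= m -> 1 < n -> ~~ odd n -> i < m ->
  WW m n i \in (if odd m then [:: LL m n 1; LL m n 0 + LL m n 0; LL m n 1 + LL m n 1]
               else [:: LL m n 0; LL m n 1; LL m n 0 + LL m n 0; LL m n 1 + LL m n 1]).
Proof.
move=> hm hn hne hi.
have Lp' := fun k => @Lp m n k hm hn hne.
move: (LL m n 0) (LL m n 1) Lp' => a b Lp'.
rewrite /WW; case: i hi => [|j] hi /=.
  rewrite (_ : 1 < m); last lia.
  rewrite Lp'; last lia.
  rewrite /= ?addn0.
  by case: (odd m); rewrite !inE eqxx ?orbT.
case h2: (j.+2 < m).
  rewrite !Lp' //= ; try lia.
  by case: (odd m); case: (odd j); rewrite /= !inE eqxx ?orbT.
rewrite !Lp' //= ; try lia.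
have em : m = j.+2 by lia.
case Hm: (odd m); case Hj: (odd j) => /=; rewrite !inE add0n.
all: rewrite ?eqxx ?orbT //; exfalso; lia.
Qed.


Lemma bigmin_le (I : finType) (P : pred I) (F : I -> nat) k i :
  P i -> \big[minn/k]_(j | P j) F j <= F i.
Proof.
move=> Pi; move: (mem_index_enum i); elim: (index_enum I) => [|x r IH] //.
rewrite big_cons inE => /orP [/eqP <-|/IH h]; first by rewrite Pi geq_minl.
case: (P x) => //; exact: leq_trans (geq_minr _ _) h.
Qed.

Arguments W_neq {m n i}. Arguments W_mem {m n i}.

Theorem mainTheorem10 (n m : nat) :
  ~~ odd n -> 1 < n -> 3 <= m ->
  chi_ld (lexprod (path_rel m) (edgeless_rel n)) <= (if odd m then 3 else 4).
Proof.
move=> hne hn hm.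
have hcard : #|{: 'I_m * 'I_n}| = m * n by rewrite card_prod !card_ord.
have hlt : forall x : 'I_m * 'I_n, vv m x.1 x.2 < #|{: 'I_m * 'I_n}|.
  by move=> x; rewrite hcard; apply: vv_lt.
pose f := [ffun x : 'I_m * 'I_n => Ordinal (hlt x)].
have hw : forall u, weight (lexprod (path_rel m) (edgeless_rel n)) f u = WW m n u.1.
  move=> u; rewrite /weight.
  rewrite (eq_bigl (fun x : 'I_m * 'I_n => path_rel m u.1 x.1 && true)); last first.
    by move=> x; rewrite /lexprod /edgeless_rel andbF orbF andbT.
  rewrite (eq_bigr (fun x : 'I_m * 'I_n => (vv m x.1 x.2).+1)); last by move=> x _; rewrite ffunE.
  rewrite -(pair_big_dep (fun i => path_rel m u.1 i) (fun _ _ => true) (fun (i : 'I_m) (j : 'I_n) => (vv m i j).+1)) /=.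
  rewrite (eq_bigr (fun i : 'I_m => LL m n i)); last first.
    by move=> i _; rewrite /LL big_mkord.
  rewrite /path_rel nbr_sum //.
have hlda : is_lda (lexprod (path_rel m) (edgeless_rel n)) f.
  apply/andP; split.
    apply/injectiveP => x y /(congr1 val); rewrite !ffunE /= => E.
    have [e1 e2] := @vv_inj m x.1 y.1 x.2 y.2 hm (ltn_ord x.1) (ltn_ord y.1) E.
    case: x y E e1 e2 => [x1 x2] [y1 y2] /= _ e1 e2.
    by congr pair; apply: val_inj.
  apply/forallP => u; apply/forallP => v; apply/implyP.
  rewrite /lexprod /edgeless_rel andbF orbF /path_rel !hw => /orP [] /eqP E.
    by rewrite -E; apply: W_neq; rewrite ?E.
  by rewrite -E eq_sym; apply: W_neq; rewrite ?E.
apply: (@leq_trans (num_weights (lexprod (path_rel m) (edgeless_rel n)) f)).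
  exact: bigmin_le.
rewrite /num_weights.
apply: (@leq_trans (size (if odd m then [:: LL m n 1; LL m n 0 + LL m n 0; LL m n 1 + LL m n 1]
               else [:: LL m n 0; LL m n 1; LL m n 0 + LL m n 0; LL m n 1 + LL m n 1]))); last by case: (odd m).
apply: uniq_leq_size; first exact: undup_uniq.
move=> x; rewrite mem_undup => /mapP [u _ ->].
rewrite hw; exact: W_mem.
Qed.
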